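(* Let $G=(V,E)$ be a finite simple undirected graph with $N=|V|\ge 2$ vertices. Then \[\frac{1}{N}\sum_{v\in V}\tilde C_v(G)\le C(G),\] i.e. the expected average clustering coefficient after deleting a uniformly random vertex is at most $C(G)$.
   Context: For a vertex $u$ of a graph, $d_u$ is its degree and $T(u)$ the number of triangles containing $u$; the local clustering coefficient is $C(u)=\frac{2T(u)}{d_u(d_u-1)}$ if $d_u>1$ and $C(u)=0$ otherwise. The average clustering coefficient of a graph $H$ with $n\ge1$ vertices is $C(H)=\frac1n\sum_{u\in V(H)}C(u)$ (local coefficients computed in $H$). For $v\in V$, $\tilde C_v(G)=C(G[V\setminus\{v\}])$, where $G[S]$ denotes the induced subgraph on $S$. *)

(* Defs.v *)
From HB Require Import structures.
From mathcomp Require Import all_boot all_order all_algebra.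
Set Implicit Arguments. Unset Strict Implicit. Unset Printing Implicit Defensive.
Import Order.TTheory GRing.Theory Num.Theory.
Local Open Scope ring_scope.

(* A finite simple undirected graph: vertex type T, adjacency e symmetric and
   irreflexive.  Quantities "in G[S]" are computed in the induced subgraph on S. *)
Definition simple_graph (T : finType) (e : rel T) : Prop :=
  symmetric e /\ irreflexive e.

Definition deg_in (T : finType) (e : rel T) (S : {set T}) (u : T) : nat :=
  #|[set w in S | e u w]|.

Definition tri_in (T : finType) (e : rel T) (S : {set T}) (u : T) : nat :=
  #|[set A : {set T} | [&& A \subset S, #|A| == 3%N, u \in A &
       [forall x in A, forall y in A, (x != y) ==> e x y]]]|.

Definition local_clust (R : realFieldType) (T : finType) (e : rel T)
  (S : {set T}) (u : T) : R :=
  let d := deg_in e S u in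
  if (1 < d)%N then (2 * (tri_in e S u)%:R) / (d%:R * (d.-1)%:R) else 0.

Definition avg_clust (R : realFieldType) (T : finType) (e : rel T)
  (S : {set T}) : R :=
  (#|S|%:R)^-1 * \sum_(u in S) local_clust R e S u.

Definition del_clust (R : realFieldType) (T : finType) (e : rel T) (v : T) : R :=
  avg_clust R e ([set: T] :\ v).

(* Main.v *)
Require Import Defs.
From HB Require Import structures.
From mathcomp Require Import all_boot all_order all_algebra.
From mathcomp Require Import ring lra zify.
Set Implicit Arguments. Unset Strict Implicit. Unset Printing Implicit Defensive.
Import Order.TTheory GRing.Theory Num.Theory.
Local Open Scope ring_scope.

Definition Tri (T : finType) (e : rel T) (S : {set T}) (u : T) :=
  [set A : {set T} | [&& A \subset S, #|A| == 3%N, u \in A &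
       [forall x in A, forall y in A, (x != y) ==> e x y]]].

Definition tcount (T : finType) (e : rel T) (u v : T) : nat :=
  #|[set A in Tri e [set: T] u | v \in A]|.

Lemma card_sumP (T : finType) (P : pred T) :
  #|[set x | P x]| = (\sum_x (P x : nat))%N.
Proof. by rewrite -sum1dep_card big_mkcond /=; apply: eq_bigr => x _; case: (P x). Qed.

Lemma tri_split (T : finType) (e : rel T) (u v : T) : v != u ->
  tri_in e [set: T] u = (tri_in e ([set: T] :\ v) u + tcount e u v)%N.
Proof.
move=> vu; rewrite /tri_in /tcount -(cardsID [set A : {set T} | v \notin A]).
congr (_ + _)%N; apply: eq_card => A; rewrite !inE ?subsetD1 ?subsetT /=;
  by case: (v \in A) => /=; rewrite ?andbF ?andbT.
Qed.


Lemma tcount0 (T : finType) (e : rel T) (u v : T) : v != u -> ~~ e u v ->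
  tcount e u v = 0%N.
Proof.
move=> vu nuv; apply/eqP; rewrite cards_eq0; apply/eqP/setP => A; rewrite !inE.
apply/negbTE/negP => /andP [/and4P [_ _ uA /forall_inP H] vA].
move: (H u uA) => /forall_inP /(_ v vA); rewrite eq_sym vu /=.
by rewrite (negbTE nuv).
Qed.


Lemma tcount_sum (T : finType) (e : rel T) (u : T) :
  (\sum_(v in [set~ u]) tcount e u v = 2 * tri_in e [set: T] u)%N.
Proof.
have E v : tcount e u v = (\sum_(A in Tri e [set: T] u) (v \in A))%N.
  rewrite /tcount -sum1dep_card big_mkcondr /=; apply: eq_bigr => A _.
  by case: (v \in A).
under eq_bigr do rewrite E.
rewrite exchange_big /= /tri_in mulnC -sum_nat_const.
apply: eq_bigr => A; rewrite inE => /and4P [_ /eqP c3 uA _].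
have : (#|A :\ u| = 2)%N by move: c3; rewrite (cardsD1 u) uA; case.
move <-; rewrite -sum1dep_card big_mkcondr /=.
rewrite [in RHS](eq_bigl (fun v => v != u)); last by move=> v; rewrite inE.
rewrite big_mkcond /= [in RHS]big_mkcond /=; apply: eq_bigr => v _.
by rewrite !inE; case: (v != u); case: (v \in A).
Qed.


Lemma deg_split (T : finType) (e : rel T) (u v : T) : v != u ->
  deg_in e [set: T] u = (deg_in e ([set: T] :\ v) u + e u v)%N.
Proof.
move=> vu; rewrite /deg_in (cardsD1 v) addnC inE in_setT /=; congr (_ + _)%N.
apply: eq_card => w; rewrite !inE.
by case: (w == v); rewrite ?andbF.
Qed.


Lemma deg_sum (T : finType) (e : rel T) (u : T) : irreflexive e ->
  (\sum_(v in [set~ u]) (e u v : nat) = deg_in e [set: T] u)%N.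
Proof.
move=> irr; rewrite /deg_in card_sumP big_mkcond /=; apply: eq_bigr => v _.
rewrite !inE; case: eqP => [->|] //=; by rewrite irr.
Qed.


Lemma lc_ge0 (R : realFieldType) (T : finType) (e : rel T) S u :
  0 <= local_clust R e S u.
Proof.
rewrite /local_clust; case: ifP => // _.
by apply: divr_ge0; rewrite ?mulr_ge0 ?ler0n.
Qed.


Lemma per_u (R : realFieldType) (T : finType) (e : rel T) (u : T) :
  simple_graph e ->
  \sum_(v in [set~ u]) local_clust R e ([set: T] :\ v) u <=
  (#|T|.-1)%:R * local_clust R e [set: T] u.
Proof.
move=> [sym irr].
set d := deg_in e [set: T] u; set Tr := tri_in e [set: T] u.
have hD v : v != u -> deg_in e ([set: T] :\ v) u = (d - e u v)%N.
  by move=> vu; rewrite /d (deg_split e vu) addnK.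
have hT v : v != u -> tri_in e ([set: T] :\ v) u = (Tr - tcount e u v)%N.
  by move=> vu; rewrite /Tr (tri_split e vu) addnK.
have hTle v : v != u -> (tcount e u v <= Tr)%N.
  by move=> vu; rewrite /Tr (tri_split e vu) leq_addl.
have nonadj v : v != u -> ~~ e u v ->
    local_clust R e ([set: T] :\ v) u = local_clust R e [set: T] u.
  move=> vu nuv; rewrite /local_clust hD // hT // tcount0 // (negbTE nuv).
  by rewrite !subn0.
rewrite -(cardsC1 u) mulr_natl -sumr_const.
set C := local_clust R e [set: T] u.
case: (leqP d 2) => hd.
  apply: ler_sum => v; rewrite !inE => vu.
  case euv: (e u v); last by rewrite nonadj ?euv.
  rewrite {1}/local_clust /= hD // euv; case: ifP => [h|_]; last exact: lc_ge0.
  by exfalso; move: h hd; lia.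
have [k dk] : exists k, d = k.+3 by exists (d - 3)%N; lia.
set K : R := (k.+3)%:R * (k.+2)%:R * (k.+1)%:R.
have hC : C = 2 * Tr%:R / ((k.+3)%:R * (k.+2)%:R).
  by rewrite /C /local_clust -/d dk.
have pv v : v \in [set~ u] -> local_clust R e ([set: T] :\ v) u =
    C + (4 * Tr%:R / K) * (e u v)%:R - (2 * d%:R / K) * (tcount e u v)%:R.
  rewrite !inE => vu; case euv: (e u v); last first.
    by rewrite nonadj ?euv // tcount0 ?euv // !mulr0 subr0 addr0.
  rewrite /local_clust hD // hT // euv dk.
  have -> : (k.+3 - true = k.+2)%N by rewrite subn1.
  rewrite /= natrB ?hTle // hC /K.
  have k0 : 0 <= k%:R :> R by apply: ler0n.
  rewrite -!natr1; field.
  by apply/and3P; split; apply: lt0r_neq0; lra.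
rewrite (eq_bigr _ pv) sumrB big_split /= -!mulr_sumr -!natr_sum.
rewrite tcount_sum deg_sum // -/d -/Tr natrM.
have K0 : K != 0 by rewrite /K !mulf_neq0 // pnatr_eq0.
rewrite -addrA.
have -> : 4 * Tr%:R / K * d%:R - 2 * d%:R / K * (2 * Tr%:R) = 0 :> R.
  by field.
by rewrite addr0.
Qed.


Theorem mainTheorem6 (R : realFieldType) (T : finType) (e : rel T) :
  simple_graph e -> (2 <= #|T|)%N ->
  (#|T|%:R)^-1 * \sum_(v : T) del_clust R e v <= avg_clust R e [set: T].
Proof.
move=> sg hT; rewrite /del_clust /avg_clust cardsT.
have cv v : #|[set: T] :\ v| = #|T|.-1 by rewrite setTD cardsC1.
under eq_bigr do rewrite cv.
rewrite -mulr_sumr.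
have -> : \sum_(v : T) \sum_(u in [set: T] :\ v) local_clust R e ([set: T] :\ v) u
   = \sum_(u : T) \sum_(v in [set~ u]) local_clust R e ([set: T] :\ v) u.
  under eq_bigr do rewrite big_mkcond /=.
  rewrite exchange_big /=; apply: eq_bigr => u _; rewrite [in RHS]big_mkcond /=.
  apply: eq_bigr => v _; by rewrite !inE ?andbT eqtype.eq_sym.
apply: ler_wpM2l; first by rewrite invr_ge0 ler0n.
have n0 : (#|T|.-1)%:R != 0 :> R by rewrite pnatr_eq0; lia.
rewrite -(mulKf n0 (\sum_(u in [set: T]) local_clust R e [set: T] u)).
apply: ler_wpM2l; first by rewrite invr_ge0 ler0n.
rewrite mulr_sumr (@eq_bigl _ _ _ _ _ (fun u => u \in [set: T]) xpredT); last by move=> u; rewrite inE.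
by apply: ler_sum => u _; apply: per_u.


Qed.
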